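(* Let $\rho_A,\rho_B\in\mathcal{P}(\mathcal{X})$ with $\mathcal{W}(\rho_A,\rho_B)<\infty$, and let $\rho:[0,1]\to\mathbb{R}^{\mathcal{X}}$ and $m:[0,1]\to\mathbb{R}^{\mathcal{X}\times\mathcal{X}}$ be measurable and optimal, i.e. $\mathcal{E}(\rho,m)=\inf\mathcal{E}=\mathcal{W}(\rho_A,\rho_B)^2$. Then for every $(x,y)\in\mathcal{S}:=\{(x,y)\in\mathcal{X}^2: Q(x,y)>0\}$ one has $m(t,x,y)=-m(t,y,x)$ for almost every $t\in[0,1]$.
   Context: Let $\mathcal{X}$ be a finite set and $Q:\mathcal{X}\times\mathcal{X}\to[0,\infty)$ with $Q(x,x)=0$, the transition rate matrix of an irreducible continuous-time Markov chain which is reversible with respect to its unique stationary distribution $\pi:\mathcal{X}\to(0,1]$, $\sum_x\pi(x)=1$, i.e. $\pi(x)Q(x,y)=\pi(y)Q(y,x)$ for all $x,y$. Let $\mathcal{P}(\mathcal{X})=\{\rho:\mathcal{X}\to[0,\infty):\sum_x\pi(x)\rho(x)=1\}$. Inner products: $\langle\phi,\psi\rangle_\pi=\sum_x\phi(x)\psi(x)\pi(x)$ on $\mathbb{R}^{\mathcal{X}}$, $\langle\Phi,\Psi\rangle_Q=\frac12\sum_{x,y}\Phi(x,y)\Psi(x,y)Q(x,y)\pi(x)$ on $\mathbb{R}^{\mathcal{X}\times\mathcal{X}}$. Discrete gradient $(\nabla_{\mathcal{X}}\psi)(x,y)=\psi(x)-\psi(y)$. An averaging function $\theta:[0,\infty)^2\to[0,\infty)$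 is fixed which is continuous, concave, 1-homogeneous, symmetric, $C^\infty$ on $(0,\infty)^2$, with $\theta(0,s)=\theta(s,0)=0$, $\theta(s,s)=s$, $\theta(s,t)>0$ for $s,t>0$, and $s\mapsto\theta(t,s)$ nondecreasing for each $t$; it is extended by $\theta(s,t)=-\infty$ if $\min\{s,t\}<0$. Define $\alpha:\mathbb{R}^3\to\mathbb{R}\cup\{\infty\}$ by $\alpha(s,t,m)=m^2/\theta(s,t)$ if $\theta(s,t)>0$, $\alpha=0$ if $\theta(s,t)=0$ and $m=0$, and $\alpha=+\infty$ otherwise. The action of measurable $\rho:[0,1]\to\mathbb{R}^{\mathcal{X}}$, $m:[0,1]\to\mathbb{R}^{\mathcal{X}\times\mathcal{X}}$ is $\mathcal{A}(\rho,m)=\frac12\int_0^1\sum_{x,y}\alpha(\rho(t,x),\rho(t,y),m(t,x,y))Q(x,y)\pi(x)\,dt$. The set $\mathcal{CE}(\rho_A,\rho_B)$ consists of all measurable pairs $(\rho,m)$ with $\int_0^1\langle\partial_t\varphi(t,\cdot),\rho(t,\cdot)\rangle_\pi+\langle\nabla_{\mathcal{X}}\varphi(t,\cdot),m(t,\cdot)\rangle_Q\,dt=\langle\varphi(1,\cdot),\rho_B\rangle_\pi-\langle\varphi(0,\cdot),\rho_A\rangle_\pi$ for all $\varphi\in C^1([0,1],\mathbb{R}^{\mathcal{X}})$. The energy is $\mathcal{E}(\rho,m)=\mathcal{A}(\rho,m)$ if $(\rho,m)\in\mathcal{CE}(\rho_A,\rho_B)$ and $+\infty$ otherwise, and $\mathcal{W}(\rho_A,\rho_B)=\sqrt{\inf\mathcal{E}}$.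 *)

(* Defs.v *)
From HB Require Import structures.
From mathcomp Require Import all_boot all_order all_algebra.
From mathcomp Require Import all_classical all_reals all_analysis.
Set Implicit Arguments. Unset Strict Implicit. Unset Printing Implicit Defensive.
Import Order.TTheory GRing.Theory Num.Theory numFieldNormedType.Exports.
Local Open Scope classical_set_scope.
Local Open Scope ring_scope.

Section Defs.
Variable R : realType.

Definition nonneg_quadrant : set (R * R) := [set p | 0 <= p.1 /\ 0 <= p.2].
Definition pos_quadrant : set (R * R) := [set p | 0 < p.1 /\ 0 < p.2].

Definition pd1 (f : R -> R -> R) : R -> R -> R :=
  fun s t => derive1 (fun u => f u t) s.
Definition pd2 (f : R -> R -> R) : R -> R -> R :=
  fun s t => derive1 (fun u => f s u) t.
Definition iter_pd (l : seq bool) (f : R -> R -> R) : R -> R -> R :=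
  foldr (fun b g => if b then pd1 g else pd2 g) f l.

Definition smooth_on (U : set (R * R)) (f : R -> R -> R) : Prop :=
  forall l : seq bool,
    (forall p, U p ->
       derivable (fun u => iter_pd l f u p.2) p.1 1 /\
       derivable (fun u => iter_pd l f p.1 u) p.2 1) /\
    {in U, continuous (fun p : R * R => iter_pd l f p.1 p.2)}.

(* theta : [0,oo)^2 -> [0,oo); its values outside the quadrant are irrelevant
   (the paper extends it by -oo there, which is encoded in [alpha] below) *)
Definition averaging_function (theta : R -> R -> R) : Prop :=
  [/\ [/\ {within nonneg_quadrant, continuous (fun p : R * R => theta p.1 p.2)},
      (forall s1 t1 s2 t2 l, 0 <= s1 -> 0 <= t1 -> 0 <= s2 -> 0 <= t2 ->
         0 <= l <= 1 ->
         l * theta s1 t1 + (1 - l) * theta s2 t2 <=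
           theta (l * s1 + (1 - l) * s2) (l * t1 + (1 - l) * t2)) &
      (forall l s t, 0 <= l -> 0 <= s -> 0 <= t ->
         theta (l * s) (l * t) = l * theta s t)],
      (forall s t, 0 <= s -> 0 <= t -> theta s t = theta t s),
      smooth_on pos_quadrant theta &
      [/\ (forall s, 0 <= s -> theta 0 s = 0 /\ theta s 0 = 0),
          (forall s, 0 <= s -> theta s s = s),
          (forall s t, 0 <= s -> 0 <= t -> 0 <= theta s t),
          (forall s t, 0 < s -> 0 < t -> 0 < theta s t) &
          (forall t s1 s2, 0 <= t -> 0 <= s1 -> s1 <= s2 ->
              theta t s1 <= theta t s2)]].

(* alpha(s,t,m) with the convention theta = -oo outside the quadrant *)
Definition alpha (theta : R -> R -> R) (s t m : R) : \bar R :=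
  if (0 <= s) && (0 <= t) then
    if 0 < theta s t then (m ^+ 2 / theta s t)%:E
    else if m == 0 then 0%E else +oo%E
  else +oo%E.

Variable X : finType.

Definition markov_setting (Q : X -> X -> R) (pi : X -> R) : Prop :=
  [/\ (forall x y, 0 <= Q x y),
      (forall x, Q x x = 0),
      (forall x y, connect (fun a b => 0 < Q a b) x y),
      (forall x, 0 < pi x) & \sum_x pi x = 1 ] /\
  (* reversibility (detailed balance), hence pi is the (unique) stationary law *)
  (forall x y, pi x * Q x y = pi y * Q y x).

Definition prob_density (pi : X -> R) (r : X -> R) : Prop :=
  (forall x, 0 <= r x) /\ \sum_x pi x * r x = 1.

Definition ip_pi (pi : X -> R) (f g : X -> R) : R := \sum_x f x * g x * pi x.
Definition ip_Q (Q : X -> X -> R) (pi : X -> R) (F G : X -> X -> R) : R :=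
  2^-1 * \sum_x \sum_y F x y * G x y * Q x y * pi x.
Definition grad (f : X -> R) : X -> X -> R := fun x y => f x - f y.

Definition I01 : set R := `[0, 1].

Definition meas_rho (rho : R -> X -> R) : Prop :=
  forall x, measurable_fun I01 (fun t => rho t x).
Definition meas_m (m : R -> X -> X -> R) : Prop :=
  forall x y, measurable_fun I01 (fun t => m t x y).

Definition action (theta : R -> R -> R) (Q : X -> X -> R) (pi : X -> R)
  (rho : R -> X -> R) (m : R -> X -> X -> R) : \bar R :=
  ((2:R)^-1)%:E * (\int[@lebesgue_measure R]_(t in I01)
     (\sum_x \sum_y alpha theta (rho t x) (rho t y) (m t x y)
                      * (Q x y * pi x)%:E))%E.

(* C^1 test functions [0,1] -> R^X (given as restrictions of C^1 maps on R) *)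
Definition C1_test (phi : R -> X -> R) : Prop :=
  forall x, (forall t, derivable (fun s => phi s x) t 1) /\
            continuous (derive1 (fun s => phi s x)).

Definition CE (Q : X -> X -> R) (pi : X -> R) (rhoA rhoB : X -> R)
  (rho : R -> X -> R) (m : R -> X -> X -> R) : Prop :=
  meas_rho rho /\ meas_m m /\
  forall phi, C1_test phi ->
    let integrand := fun t =>
      ip_pi pi (fun x => derive1 (fun s => phi s x) t) (rho t)
      + ip_Q Q pi (grad (phi t)) (m t) in
    (@lebesgue_measure R).-integrable I01 (fun t => (integrand t)%:E) /\
    (\int[@lebesgue_measure R]_(t in I01) integrand t
       = ip_pi pi (phi 1) rhoB - ip_pi pi (phi 0) rhoA)%R.

Definition energy theta Q pi rhoA rhoB rho m : \bar R :=
  if `[< CE Q pi rhoA rhoB rho m >] then action theta Q pi rho m else +oo%E.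

(* inf E over all measurable pairs;  W(rhoA, rhoB)^2 = energy_inf *)
Definition energy_inf theta Q pi rhoA rhoB : \bar R :=
  ereal_inf [set e | exists (rho : R -> X -> R) (m : R -> X -> X -> R),
               [/\ meas_rho rho, meas_m m &
                   e = energy theta Q pi rhoA rhoB rho m]].

End Defs.

(* Main.v *)
Require Import Defs.
From HB Require Import structures.
From mathcomp Require Import all_boot all_order all_algebra.
From mathcomp Require Import all_classical all_reals all_analysis.
From mathcomp Require Import ring lra.
From mathcomp Require Import measurable_realfun.
Import Order.TTheory GRing.Theory Num.Theory numFieldNormedType.Exports.
Local Open Scope classical_set_scope.
Local Open Scope ring_scope.

Lemma sum_pair_le (R : realType) (I : finType) (F G : I -> I -> \bar R) :
  (forall u v, (G u v + G v u <= F u v + F v u)%E) ->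
  (\sum_u \sum_v G u v <= \sum_u \sum_v F u v)%E.
Proof.
move=> h.
have E (H : I -> I -> \bar R) : (\sum_u \sum_v (H u v + H v u) =
     \sum_u \sum_v H u v + \sum_u \sum_v H u v)%E.
  rewrite (eq_bigr (fun u => \sum_v H u v + \sum_v H v u)%E); last first.
    by move=> u _; rewrite big_split.
  by rewrite big_split /= [X in (_ + X)%E]exchange_big.
have : (\sum_u \sum_v (G u v + G v u) <= \sum_u \sum_v (F u v + F v u))%E.
  by apply: lee_sum => u _; apply: lee_sum => v _; exact: h.
rewrite !E => hh; rewrite leNgt; apply/negP => H.
by have := lteD H H; rewrite ltNge hh.
Qed.

Lemma cont_seg (R : realType) (th : R -> R -> R) :
  {within @nonneg_quadrant R, continuous (fun p : R * R => th p.1 p.2)} ->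
  {within `[0, 1], continuous (fun r : R => th r (1 - r))}.
Proof.
move=> /subspace_continuousP hc; apply/subspace_continuousP => x x01.
have Qx : @nonneg_quadrant R (x, 1 - x).
  move: x01; rewrite /= in_itv /= => /andP[x0 x1]; split => //=; lra.
have Hphi : (fun r : R => (r, 1 - r)) @ within `[0, 1] (nbhs x) -->
            within (@nonneg_quadrant R) (nbhs (x, 1 - x)).
  have cphi : (fun r : R => (r, 1 - r)) @ x --> (x, 1 - x).
    apply: (@cvg_pair _ _ _ _ (nbhs x) (nbhs (1 - x))).
      exact: cvg_id.
    apply: cvgB; [exact: cvg_cst|exact: cvg_id].
  move=> P /= HP; have := cphi _ HP; rewrite /within /=.
  move=> H; rewrite !nbhs_simpl /= in H *.
  move: H; apply: filterS => r /= Hr r01; apply: Hr.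
  move: r01; rewrite /= in_itv /= => /andP[r0 r1]; split => //=; lra.
exact: (cvg_trans (cvg_app _ Hphi) (hc _ Qx)).
Qed.

Lemma measurable_inv (R : realType) : measurable_fun [set: R] (fun x : R => x^-1).
Proof.
have -> : (fun x : R => x^-1) = (fun x => if x == 0 then 0 else x^-1).
  by apply: funext => x; case: eqP => // ->; rewrite invr0.
apply: measurable_fun_if => //.
- exact: measurable_realfun.measurable_fun_eqr.
have -> : [set: R] `&` (fun x : R => x == 0) @^-1` [set false] = ~` [set 0].
  by apply/seteqP; split => x /=; [case=> _ /eqP|move=> /eqP /negbTE ->].
apply: measurable_realfun.open_continuous_measurable_fun.
  by rewrite openC; exact: closed_eq.
move=> x; rewrite inE /= => /eqP x0; exact: inv_continuous.
Qed.

Definition clamp01 (R : realType) (r : R) : R := Num.min (Num.max r 0) 1.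
Arguments clamp01 {R}.
Definition gg (R : realType) (th : R -> R -> R) (r : R) : R :=
  th (clamp01 r) (1 - clamp01 r).
Arguments gg {R}.
Definition Th (R : realType) (th : R -> R -> R) (s t : R) : R :=
  (s + t) * gg th (s / (s + t)).
Arguments Th {R}.

Lemma th_decomp (R : realType) (th : R -> R -> R) s t :
  averaging_function th -> 0 <= s -> 0 <= t -> th s t = Th th s t.
Proof.
move=> [[_ _ hom] _ _ [h0 _ _ _ _]] s0 t0.
rewrite /Th /gg.
have [st0|st0] := eqVneq (s + t) 0.
  have s00 : s = 0 by lra.
  have t00 : t = 0 by lra.
  by rewrite s00 t00 addr0 mul0r; case: (h0 0 (lexx 0)).
have l0 : 0 < s + t by rewrite lt_neqAle eq_sym st0 addr_ge0.
have q0 : 0 <= s / (s + t) by rewrite divr_ge0 // ltW.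
have q1 : s / (s + t) <= 1 by rewrite ler_pdivrMr // mul1r lerDl.
have c01 : clamp01 (s / (s + t)) = s / (s + t).
  by rewrite /clamp01 (max_l q0) (min_l q1).
rewrite c01 -hom //; [|exact: ltW|by rewrite subr_ge0].
congr th; first by rewrite mulrC divfK // gt_eqF.
by field; rewrite gt_eqF.
Qed.

Lemma gg_meas (R : realType) (th : R -> R -> R) :
  averaging_function th -> measurable_fun [set: R] (gg th).
Proof.
move=> [[cth _ _] _ _ _].
have -> : gg th = (fun r => th r (1 - r)) \o (@clamp01 R) by [].
apply: (@measurable_comp _ _ _ _ _ _ (`[0, 1]%classic : set R)).
- exact: measurable_itv.
- move=> _ [r _ <-]; rewrite /= in_itv /= /clamp01.
  apply/andP; split; first by rewrite le_min ler01 le_max lexx orbT.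
  by rewrite ge_min lexx orbT.
- apply: measurable_realfun.subspace_continuous_measurable_fun; first exact: measurable_itv.
  exact: cont_seg.
- apply: measurable_realfun.measurable_minr => //.
  exact: measurable_realfun.measurable_maxr.
Qed.

Lemma mif d (T : measurableType d) (R : realType) (D : set T) (b : T -> bool)
  (g h : T -> \bar R) : measurable D -> measurable_fun D b ->
  measurable_fun D g -> measurable_fun D h ->
  measurable_fun D (fun t => if b t then g t else h t).
Proof.
move=> mD mb mg mh; apply: measurable_fun_if => //.
  exact: (measurable_funS mD _ mg).
exact: (measurable_funS mD _ mh).
Qed.

Lemma alpha_meas d (T : measurableType d) (R : realType) (th : R -> R -> R)
  (D : set T) (f g c : T -> R) :
  averaging_function th -> measurable D -> measurable_fun D f ->
  measurable_fun D g -> measurable_fun D c ->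
  measurable_fun D (fun t => alpha th (f t) (g t) (c t)).
Proof.
move=> ath mD mf mg mc.
pose Th' := fun t => Th th (f t) (g t).
have mTh : measurable_fun D Th'.
  rewrite /Th' /Th; apply: measurable_funM; first exact: measurable_funD.
  apply: measurableT_comp; first exact: gg_meas.
  apply: measurable_funM => //; apply: measurableT_comp; first exact: measurable_inv.
  exact: measurable_funD.
have -> : (fun t => alpha th (f t) (g t) (c t)) = fun t =>
    if 0 <= f t then if 0 <= g t then
      (if 0 < Th' t then ((c t)^+2 / Th' t)%:E else if c t == 0 then 0%E else +oo%E)
    else +oo%E else +oo%E.
  apply: funext => t; rewrite /alpha /Th'.
  case f0: (0 <= f t); case g0: (0 <= g t) => //=.
  by rewrite -(@th_decomp R th (f t) (g t) ath) ?f0 ?g0.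
apply: mif => //; first exact: measurable_realfun.measurable_fun_ler.
apply: mif => //; first exact: measurable_realfun.measurable_fun_ler.
apply: mif => //; first exact: measurable_realfun.measurable_fun_ltr.
  apply/measurable_EFinP; apply: measurable_funM.
    exact: measurable_funX.
  by apply: measurableT_comp; [exact: measurable_inv|].
apply: mif => //; exact: measurable_realfun.measurable_fun_eqr.
Qed.

Lemma ipQ_anti (R : realType) (X : finType) (Q : X -> X -> R) (pi : X -> R)
  (f : X -> R) (M : X -> X -> R) :
  (forall x y, pi x * Q x y = pi y * Q y x) ->
  ip_Q Q pi (grad f) (fun u v => (M u v - M v u) / 2) = ip_Q Q pi (grad f) M.
Proof.
move=> rev; rewrite /ip_Q /grad; congr (_ * _).
set S := \sum_x \sum_y (f x - f y) * M x y * Q x y * pi x.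
set S' := \sum_x \sum_y (f x - f y) * M y x * Q x y * pi x.
have S'E : S' = - S.
  rewrite /S' exchange_big /S -sumrN; apply: eq_bigr => u _.
  rewrite -sumrN; apply: eq_bigr => v _.
  rewrite (_ : (f v - f u) * M u v * Q v u * pi v =
               (f v - f u) * M u v * (pi v * Q v u)); last by ring.
  by rewrite -rev; ring.
have -> : \sum_x \sum_y (f x - f y) * ((M x y - M y x) / 2) * Q x y * pi x
          = 2^-1 * S - 2^-1 * S'.
  rewrite /S /S' !mulr_sumr -sumrB; apply: eq_bigr => u _.
  rewrite !mulr_sumr -sumrB; apply: eq_bigr => v _; ring.
by rewrite S'E; field.
Qed.

Lemma term_le_sum (R : realType) (I : finType) (F : I -> \bar R) j :
  (forall i, (0 <= F i)%E) -> (F j <= \sum_i F i)%E.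
Proof.
move=> h; rewrite (bigD1 j) //=; apply: leeDl; exact: sume_ge0.
Qed.
Section Alpha.
Variable R : realType.
Variable th : R -> R -> R.

Lemma alpha_ge0 s t c : (0 <= alpha th s t c)%E.
Proof.
rewrite /alpha; case: ifP => // _; case: ifP => [p|_].
  by rewrite lee_fin divr_ge0 ?sqr_ge0 // ltW.
by case: ifP.
Qed.

Lemma alphaN s t c : alpha th s t (- c) = alpha th s t c.
Proof. by rewrite /alpha sqrrN oppr_eq0. Qed.

Lemma alpha_sym (hsym : forall s t, 0 <= s -> 0 <= t -> th s t = th t s) s t c :
  alpha th s t c = alpha th t s c.
Proof.
rewrite /alpha andbC; case: ifP => // /andP[t0 s0].
by rewrite hsym.
Qed.

Lemma alpha_eq0 s t c : alpha th s t c = 0%E -> c = 0.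
Proof.
rewrite /alpha; case: ifP => // _; case: ifP => [p|_].
  move=> [] /eqP; rewrite mulf_eq0 invr_eq0 (gt_eqF p) orbF sqrf_eq0.
  by move/eqP.
by case: ifP => // /eqP.
Qed.

Lemma alpha_split s t a b :
  (alpha th s t ((a - b) / 2) + alpha th s t ((a - b) / 2)
   + (alpha th s t ((a + b) / 2) + alpha th s t ((a + b) / 2))
   <= alpha th s t a + alpha th s t b)%E.
Proof.
rewrite /alpha; case: ifP => _; last by rewrite leey.
case: ifP => [p|_].
  rewrite -!EFinD lee_fin le_eqVlt; apply/orP; left; apply/eqP.
  by field; rewrite gt_eqF.
have [->|a0] := eqVneq a 0; last by rewrite addye ?leey //; case: ifP.
have [->|b0] := eqVneq b 0; last by rewrite addey ?leey.
by rewrite subr0 addr0 mul0r eqxx !adde0.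
Qed.
End Alpha.

Lemma pair_ineq (R : realType) (X : finType) (th : R -> R -> R)
  (hsym : forall s t, 0 <= s -> 0 <= t -> th s t = th t s)
  (r : X -> R) (M : X -> X -> R) (w : X -> X -> R)
  (w0 : forall u v, 0 <= w u v) (wsym : forall u v, w u v = w v u) u v :
  ((alpha th (r u) (r v) ((M u v - M v u) / 2) * (w u v)%:E
    + alpha th (r u) (r v) ((M u v + M v u) / 2) * (w u v)%:E)
   + (alpha th (r v) (r u) ((M v u - M u v) / 2) * (w v u)%:E
    + alpha th (r v) (r u) ((M v u + M u v) / 2) * (w v u)%:E)
  <= alpha th (r u) (r v) (M u v) * (w u v)%:E
     + alpha th (r v) (r u) (M v u) * (w v u)%:E)%E.
Proof.
rewrite (@alpha_sym R th hsym (r v) (r u)) (@alpha_sym R th hsym (r v) (r u) ((M v u + M u v) / 2)).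
rewrite (@alpha_sym R th hsym (r v) (r u) (M v u)) -(wsym u v).
have -> : (M v u - M u v) / 2 = - ((M u v - M v u) / 2) by ring.
rewrite alphaN [M v u + _]addrC.
set A := alpha th (r u) (r v).
have A0 c : (0 <= A c)%E by exact: alpha_ge0.
rewrite -!ge0_muleDl ?adde_ge0 //.
apply: lee_wpmul2r; first by rewrite lee_fin.
rewrite addeACA; exact: alpha_split.
Qed.

Theorem lemma2p4 (R : realType) (X : finType) (Q : X -> X -> R) (pi : X -> R)
  (theta : R -> R -> R) (rhoA rhoB : X -> R)
  (rho : R -> X -> R) (m : R -> X -> X -> R) :
  markov_setting Q pi ->
  averaging_function theta ->
  prob_density pi rhoA -> prob_density pi rhoB ->
  (energy_inf theta Q pi rhoA rhoB < +oo)%E ->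
  meas_rho rho -> meas_m m ->
  energy theta Q pi rhoA rhoB rho m = energy_inf theta Q pi rhoA rhoB ->
  forall x y, 0 < Q x y ->
    (@lebesgue_measure R).-negligible
      (@I01 R `&` [set t | m t x y <> - m t y x]).
Proof.
move=> [[Q0 _ _ pi0 _] rev] ath _ _ hfin mrho mm hopt x y Qxy.
have hsym : forall s t, 0 <= s -> 0 <= t -> theta s t = theta t s.
  by case: ath.
have hCE : CE Q pi rhoA rhoB rho m.
  move: hopt hfin; rewrite /energy; case: asboolP => // _ <-.
  by rewrite ltxx.
pose m' := fun t u v => (m t u v - m t v u) / 2.
have mm' : meas_m m'.
  move=> u v; rewrite /m'; apply: measurable_funM.
    exact: measurable_funB.
  exact: measurable_cst.
have hCE' : CE Q pi rhoA rhoB rho m'.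
  case: hCE => _ [_ hphi]; split => //; split => // phi hp.
  have -> : (fun t => ip_pi pi (fun x => derive1 (fun s => phi s x) t) (rho t)
              + ip_Q Q pi (grad (phi t)) (m' t)) =
            (fun t => ip_pi pi (fun x => derive1 (fun s => phi s x) t) (rho t)
              + ip_Q Q pi (grad (phi t)) (m t)).
    by apply: funext => t; rewrite /m' ipQ_anti.
  exact: hphi.
have eqA : energy theta Q pi rhoA rhoB rho m = action theta Q pi rho m.
  by rewrite /energy; case: asboolP.
have eqA' : energy theta Q pi rhoA rhoB rho m' = action theta Q pi rho m'.
  by rewrite /energy; case: asboolP.
have le1 : (action theta Q pi rho m <= action theta Q pi rho m')%E.
  rewrite -eqA -eqA' hopt; apply: ereal_inf_lbound; exists rho, m'; split => //.
have fin : (action theta Q pi rho m < +oo)%E by rewrite -eqA hopt.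
pose mu := @lebesgue_measure R.
pose w u v := Q u v * pi u.
have w0 u v : 0 <= w u v by rewrite /w mulr_ge0 // ltW.
have wsym u v : w u v = w v u by rewrite /w mulrC rev mulrC.
pose f t := (\sum_u \sum_v alpha theta (rho t u) (rho t v) (m t u v) * (w u v)%:E)%E.
pose f' t := (\sum_u \sum_v alpha theta (rho t u) (rho t v) (m' t u v) * (w u v)%:E)%E.
pose H t := (\sum_u \sum_v alpha theta (rho t u) (rho t v) ((m t u v + m t v u) / 2)
               * (w u v)%:E)%E.
have Af : action theta Q pi rho m = (((2:R)^-1)%:E * \int[mu]_(t in @I01 R) f t)%E by [].
have Af' : action theta Q pi rho m' = (((2:R)^-1)%:E * \int[mu]_(t in @I01 R) f' t)%E by [].
have mI : measurable (@I01 R) by exact: measurable_itv.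
have h2 : ((2:R)^-1)%:E \is a fin_num by [].
have h2' : (0 < ((2:R)^-1)%:E)%E by rewrite lte_fin invr_gt0.
have If : (\int[mu]_(t in @I01 R) f t <= \int[mu]_(t in @I01 R) f' t)%E.
  by move: le1; rewrite Af Af' lee_pmul2l.
have Ifin : (\int[mu]_(t in @I01 R) f t < +oo)%E.
  move: fin; rewrite Af !ltNge; apply: contra; rewrite leye_eq => /eqP ->.
  by rewrite gt0_muley.
have term0 M u v t : (0 <= alpha theta (rho t u) (rho t v) (M u v) * (w u v)%:E)%E.
  by apply: mule_ge0; [exact: alpha_ge0| rewrite lee_fin].
have sum0 M t : (0 <= \sum_u \sum_v alpha theta (rho t u) (rho t v) (M u v) * (w u v)%:E)%E.
  by apply: sume_ge0 => u _; apply: sume_ge0 => v _; exact: term0.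
have msum M : (forall u v, measurable_fun (@I01 R) (fun t => M t u v)) ->
    measurable_fun (@I01 R) (fun t =>
      \sum_u \sum_v alpha theta (rho t u) (rho t v) (M t u v) * (w u v)%:E)%E.
  move=> mM; apply: emeasurable_sum => u; apply: emeasurable_sum => v.
  apply: emeasurable_funM; last exact: measurable_cst.
  apply: alpha_meas => //.
have mf : measurable_fun (@I01 R) f by exact: msum.
have mf' : measurable_fun (@I01 R) f' by exact: msum.
have mH : measurable_fun (@I01 R) H.
  apply: (msum (fun t u v => (m t u v + m t v u) / 2)) => u v.
  apply: measurable_funM; last exact: measurable_cst.
  exact: measurable_funD.
have f0 t : (0 <= f t)%E by exact: (sum0 (m t)).
have f'0 t : (0 <= f' t)%E by exact: (sum0 (m' t)).
have H0 t : (0 <= H t)%E by exact: (sum0 (fun u v => (m t u v + m t v u) / 2)).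
have pw t : (f' t + H t <= f t)%E.
  rewrite /f' /H -big_split /=.
  under eq_bigr do rewrite -big_split.
  apply: sum_pair_le => u v /=.
  exact: (@pair_ineq R X theta hsym (rho t) (m t) w w0 wsym u v).
have IH : (\int[mu]_(t in @I01 R) f' t + \int[mu]_(t in @I01 R) H t
           <= \int[mu]_(t in @I01 R) f t)%E.
  rewrite -ge0_integralD //; apply: ge0_le_integral => //.
    by move=> t _; apply: adde_ge0.
  exact: emeasurable_funD.
have If'fin : (\int[mu]_(t in @I01 R) f' t)%E \is a fin_num.
  rewrite ge0_fin_numE; last exact: integral_ge0.
  apply: le_lt_trans Ifin; apply: le_trans IH.
  by apply: leeDl; exact: integral_ge0.
have IH0 : (\int[mu]_(t in @I01 R) H t = 0)%E.
  apply/eqP; rewrite eq_le integral_ge0 // andbT.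
  rewrite -(leeD2lE _ _ If'fin) adde0.
  exact: le_trans IH If.
have Iabs : (\int[mu]_(t in @I01 R) `|H t| = 0)%E.
  by rewrite -IH0; apply: eq_integral => t _; rewrite gee0_abs.
have hae := (ae_eq_integral_abs mu mI mH).1 Iabs.
apply: (negligibleS _ hae) => t [It hne] /= hH.
have Ht : H t = 0%E by exact: hH.
apply: hne.
have T0 : (alpha theta (rho t x) (rho t y) ((m t x y + m t y x) / 2) * (w x y)%:E = 0)%E.
  apply/eqP; rewrite eq_le; apply/andP; split; last first.
    exact: (term0 (fun u v => (m t u v + m t v u) / 2)).
  rewrite -Ht.
  apply: (@le_trans _ _ (\sum_v alpha theta (rho t x) (rho t v)
              ((m t x v + m t v x) / 2) * (w x v)%:E)%E).
    apply: (@term_le_sum R X (fun v => alpha theta (rho t x) (rho t v)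
              ((m t x v + m t v x) / 2) * (w x v)%:E)%E y).
    by move=> v; exact: (term0 (fun u v => (m t u v + m t v u) / 2)).
  apply: (@term_le_sum R X (fun u => \sum_v alpha theta (rho t u) (rho t v)
              ((m t u v + m t v u) / 2) * (w u v)%:E)%E x).
  by move=> u; apply: sume_ge0 => v _; exact: (term0 (fun u v => (m t u v + m t v u) / 2)).
move/eqP: T0; rewrite mule_eq0 => /orP[/eqP /alpha_eq0 h|].
  lra.
by rewrite eqe /w gt_eqF // mulr_gt0.
Qed.
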